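(* Let $A$ be a formula of $\mathbf{L_1}$ and let a branch $A=C_0,C_1,\dots,C_m$ of a tableau for $A$ end with a Hintikka formula $C_m$. Then every $C_i$ is a positive part of $C_m$, $\vdash_H C_i\supset C_{i+1}$ for each $i<m$, and $\dashv_H C_i$ for every $i\le m$.
   Context: Formulas of $\mathbf{L_1}$: built from atomic formulas $\epsilon ab$ ($a,b$ name variables, possibly equal) with primitive connectives $\vee,\sim$; $\wedge,\supset,\equiv$ defined as usual. Disjunctions may be associated in any way. $\vdash_H A$: $A$ belongs to the smallest set containing all instances of classical propositional tautologies and all formulas $\epsilon ab\supset\epsilon aa$, $(\epsilon ab\wedge\epsilon bc)\supset\epsilon ac$, $(\epsilon ab\wedge\epsilon bb)\supset\epsilon ba$, closed under modus ponens. Positive/negative parts (occurrences): $A$ is a positive part of $A$; if $B\vee C$ is a positive part then $B,C$ are positive parts; if $\sim B$ is a positive part then $B$ is a negative part; if $\sim B$ is a negative part then $B$ is a positive part. $F[B_+]$ ($G[B_-]$) denotes a formula with a specified occurrence of $B$ as positive (negative) part; $F[B_+,C_-]$ etc. denote specified non-overlapping occurrences. Tableaux: reduction rules ($\vee_-$) $G[B\vee C_-]$ $\mapsto$ two branches $G[B\vee C_-]\vee\sim B$, $G[B\vee C_-]\vee\sim C$; ($\epsilon_1$) $G[\epsilon ab_-]\mapsto G[\epsilon ab_-]\vee\sim\epsilon aa$; ($\epsilon_2$) $G[\epsilon ab_-,\epsilon bc_-]\mapsto G[\epsilon ab_-,\epsilon bc_-]\vee\sim\epsilon ac$; ($\epsilon_{3b}$)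 $G[\epsilon ab_-,\epsilon bb_-]\mapsto G[\epsilon ab_-,\epsilon bb_-]\vee\sim\epsilon ba$. A tableau for $A$ is a finite tree with root $A$ whose non-leaf nodes have as children the result of applying one rule. Hintikka formula: a formula $H$ such that (1) $H$ is not of the form $F[B_+,B_-]$; (2) if $B\vee C$ is a negative part of $H$ then $B$ or $C$ is; (3) if $\epsilon ab$ is a negative part then so is $\epsilon aa$; (4) if $\epsilon ab,\epsilon bc$ are negative parts then so is $\epsilon ac$; (5) if $\epsilon ab,\epsilon bb$ are negative parts then so is $\epsilon ba$. $\mathbf{HAR}$: fix a name variable $a_0$; $\dashv_H$ is the smallest set such that $\dashv_H\epsilon a_0a_0$; $\dashv_H\sim\epsilon a_0a_0$; if $\vdash_H A\supset B$ and $\dashv_H B$ then $\dashv_H A$; if $\dashv_H A$ and $A$ is obtained from $B$ by uniform substitution of name variables for name variables then $\dashv_H B$; if $A$ is a Hintikka formula that is a disjunction of atomic or negated atomic formulas, $\dashv_H A$, and $\epsilon ab$ is not a negative part of $A$, then $\dashv_H A\vee\epsilon ab$. *)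

(* Defs.v *)
From Stdlib Require Import List.
Import ListNotations.

Inductive form : Type :=
| Eps : nat -> nat -> form
| Or  : form -> form -> form
| Neg : form -> form.

Definition Imp (A B : form) : form := Or (Neg A) B.
Definition And (A B : form) : form := Neg (Or (Neg A) (Neg B)).
Definition Equiv (A B : form) : form := And (Imp A B) (Imp B A).

(* Truth-value semantics treating atomic formulas as propositional variables;
   a formula is an instance of a classical propositional tautology iff it is
   true under every assignment of truth values to its atomic formulas. *)
Fixpoint eval (v : nat -> nat -> bool) (A : form) : bool :=
  match A with
  | Eps a b => v a b
  | Or B C => eval v B || eval v C
  | Neg B => negb (eval v B)
  end.

Definition taut_instance (A : form) : Prop := forall v, eval v A = true.

Inductive provH : form -> Prop :=
| pH_taut : forall A, taut_instance A -> provH A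
| pH_ax1 : forall a b, provH (Imp (Eps a b) (Eps a a))
| pH_ax2 : forall a b c, provH (Imp (And (Eps a b) (Eps b c)) (Eps a c))
| pH_ax3 : forall a b, provH (Imp (And (Eps a b) (Eps b b)) (Eps b a))
| pH_mp : forall A B, provH (Imp A B) -> provH A -> provH B.

(* Occurrences are identified by paths from the root. *)
Inductive dir : Type := dL | dR | dN.
Definition path := list dir.

(* part F p B s : the occurrence of B at path p in F is a positive part
   (s = true) resp. a negative part (s = false) of F, following the
   inductive definition of positive/negative parts. *)
Inductive part (F : form) : path -> form -> bool -> Prop :=
| part_root : part F [] F true
| part_orL : forall p B C, part F p (Or B C) true -> part F (p ++ [dL]) B true
| part_orR : forall p B C, part F p (Or B C) true -> part F (p ++ [dR]) C true
| part_negP : forall p B, part F p (Neg B) true -> part F (p ++ [dN]) B false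
| part_negN : forall p B, part F p (Neg B) false -> part F (p ++ [dN]) B true.

Definition pos_part (B F : form) : Prop := exists p, part F p B true.
Definition neg_part (B F : form) : Prop := exists p, part F p B false.

Definition prefix (p q : path) : Prop := exists r, q = p ++ r.
Definition nonoverlap (p q : path) : Prop := ~ prefix p q /\ ~ prefix q p.

Definition rule_or (G G1 G2 : form) : Prop :=
  exists p B C, part G p (Or B C) false /\ G1 = Or G (Neg B) /\ G2 = Or G (Neg C).

Definition rule_eps (G G' : form) : Prop :=
  (exists p a b, part G p (Eps a b) false /\ G' = Or G (Neg (Eps a a)))
  \/ (exists p q a b c, part G p (Eps a b) false /\ part G q (Eps b c) false
        /\ nonoverlap p q /\ G' = Or G (Neg (Eps a c)))
  \/ (exists p q a b, part G p (Eps a b) false /\ part G q (Eps b b) false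
        /\ nonoverlap p q /\ G' = Or G (Neg (Eps b a))).

Inductive tree : Type :=
| Leaf : form -> tree
| Node1 : form -> tree -> tree
| Node2 : form -> tree -> tree -> tree.

Definition label (t : tree) : form :=
  match t with Leaf C => C | Node1 C _ => C | Node2 C _ _ => C end.

Fixpoint tableau_ok (t : tree) : Prop :=
  match t with
  | Leaf _ => True
  | Node1 C t1 => rule_eps C (label t1) /\ tableau_ok t1
  | Node2 C t1 t2 => rule_or C (label t1) (label t2) /\ tableau_ok t1 /\ tableau_ok t2
  end.

Definition tableau_for (A : form) (t : tree) : Prop := label t = A /\ tableau_ok t.

Inductive branch : tree -> list form -> Prop :=
| br_leaf : forall C, branch (Leaf C) [C]
| br_node1 : forall C t cs, branch t cs -> branch (Node1 C t) (C :: cs)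
| br_node2l : forall C t1 t2 cs, branch t1 cs -> branch (Node2 C t1 t2) (C :: cs)
| br_node2r : forall C t1 t2 cs, branch t2 cs -> branch (Node2 C t1 t2) (C :: cs).

Definition hintikka (H : form) : Prop :=
  (~ exists B p q, part H p B true /\ part H q B false /\ nonoverlap p q)
  /\ (forall B C, neg_part (Or B C) H -> neg_part B H \/ neg_part C H)
  /\ (forall a b, neg_part (Eps a b) H -> neg_part (Eps a a) H)
  /\ (forall a b c, neg_part (Eps a b) H -> neg_part (Eps b c) H -> neg_part (Eps a c) H)
  /\ (forall a b, neg_part (Eps a b) H -> neg_part (Eps b b) H -> neg_part (Eps b a) H).

(* disjunctions (associated in any way) of atomic or negated atomic formulas;
   a single literal counts as a (one-member) disjunction *)
Inductive lit_disj : form -> Prop :=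
| ld_eps : forall a b, lit_disj (Eps a b)
| ld_neps : forall a b, lit_disj (Neg (Eps a b))
| ld_or : forall A B, lit_disj A -> lit_disj B -> lit_disj (Or A B).

Fixpoint subst (s : nat -> nat) (A : form) : form :=
  match A with
  | Eps a b => Eps (s a) (s b)
  | Or B C => Or (subst s B) (subst s C)
  | Neg B => Neg (subst s B)
  end.

Inductive refutH (a0 : nat) : form -> Prop :=
| rH_eps : refutH a0 (Eps a0 a0)
| rH_neps : refutH a0 (Neg (Eps a0 a0))
| rH_mp : forall A B, provH (Imp A B) -> refutH a0 B -> refutH a0 A
| rH_subst : forall A B s, refutH a0 A -> A = subst s B -> refutH a0 B
| rH_ext : forall A a b, hintikka A -> lit_disj A -> refutH a0 A ->
    ~ neg_part (Eps a b) A -> refutH a0 (Or A (Eps a b)).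

(* Main.v *)
Require Import Defs.
From Stdlib Require Import List.
From Stdlib Require Import Lia Bool.
Import ListNotations.

Inductive pt : bool -> form -> path -> form -> bool -> Prop :=
| pt_root : forall s F, pt s F [] F s
| pt_L : forall B C p X s', pt true B p X s' -> pt true (Or B C) (dL::p) X s'
| pt_R : forall B C p X s', pt true C p X s' -> pt true (Or B C) (dR::p) X s'
| pt_N : forall s B p X s', pt (negb s) B p X s' -> pt s (Neg B) (dN::p) X s'.

Lemma pt_app_L : forall s F p Y s', pt s F p Y s' -> forall B C, Y = Or B C -> s' = true ->
  pt s F (p++[dL]) B true.
Proof.
  induction 1; intros; subst; simpl.
  - apply pt_L, pt_root.
  - apply pt_L; eauto.
  - apply pt_R; eauto.
  - apply pt_N; eauto.
Qed.

Lemma pt_app_R : forall s F p Y s', pt s F p Y s' -> forall B C, Y = Or B C -> s' = true ->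
  pt s F (p++[dR]) C true.
Proof.
  induction 1; intros; subst; simpl.
  - apply pt_R, pt_root.
  - apply pt_L; eauto.
  - apply pt_R; eauto.
  - apply pt_N; eauto.
Qed.

Lemma pt_app_N : forall s F p Y s', pt s F p Y s' -> forall B, Y = Neg B ->
  pt s F (p++[dN]) B (negb s').
Proof.
  induction 1; intros; subst; simpl.
  - apply pt_N, pt_root.
  - apply pt_L; eauto.
  - apply pt_R; eauto.
  - apply pt_N; eauto.
Qed.

Lemma part_pt : forall F p B s, part F p B s -> pt true F p B s.
Proof.
  induction 1.
  - apply pt_root.
  - eapply pt_app_L; eauto.
  - eapply pt_app_R; eauto.
  - exact (pt_app_N _ _ _ _ _ IHpart B eq_refl).
  - exact (pt_app_N _ _ _ _ _ IHpart B eq_refl).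
Qed.

Lemma pt_part_gen : forall s F p X s', pt s F p X s' ->
  forall G q, part G q F s -> part G (q++p) X s'.
Proof.
  induction 1; intros G q HG.
  - rewrite app_nil_r; auto.
  - replace (q ++ dL :: p) with ((q ++ [dL]) ++ p) by (rewrite <- app_assoc; reflexivity).
    apply IHpt. eapply part_orL; eauto.
  - replace (q ++ dR :: p) with ((q ++ [dR]) ++ p) by (rewrite <- app_assoc; reflexivity).
    apply IHpt. eapply part_orR; eauto.
  - replace (q ++ dN :: p) with ((q ++ [dN]) ++ p) by (rewrite <- app_assoc; reflexivity).
    apply IHpt. destruct s; simpl.
    + eapply part_negP; eauto.
    + eapply part_negN; eauto.
Qed.

Lemma pt_part : forall F p B s, pt true F p B s -> part F p B s.
Proof. intros. change p with ([] ++ p). eapply pt_part_gen; eauto. apply part_root. Qed.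

Lemma neg_part_pt : forall B F, neg_part B F <-> exists p, pt true F p B false.
Proof. split; intros [p H]; exists p; [apply part_pt|apply pt_part]; auto. Qed.
Lemma pos_part_pt : forall B F, pos_part B F <-> exists p, pt true F p B true.
Proof. split; intros [p H]; exists p; [apply part_pt|apply pt_part]; auto. Qed.

Fixpoint fsize F := match F with Eps _ _ => 1 | Or B C => S (fsize B + fsize C) | Neg B => S (fsize B) end.

Lemma pt_size : forall s X r Y s', pt s X r Y s' -> fsize Y <= fsize X /\ (r <> [] -> fsize Y < fsize X).
Proof.
  induction 1; simpl; split; intros; try lia; try congruence.
Qed.

Lemma pt_sub : forall s F p X s1, pt s F p X s1 -> forall r Y s2, pt s F (p++r) Y s2 -> pt s1 X r Y s2.
Proof.
  induction 1; simpl; intros r Y s2 H2; auto.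
  - inversion H2; subst; auto.
  - inversion H2; subst; auto.
  - inversion H2; subst; auto.
Qed.

Lemma pt_self : forall s1 B r s2, pt s1 B r B s2 -> s1 <> s2 -> False.
Proof.
  intros s1 B r s2 H Hne. destruct r.
  - inversion H; subst; auto.
  - apply pt_size in H. destruct H as [_ H]. specialize (H ltac:(discriminate)). lia.
Qed.

Lemma H_noconf : forall H B, hintikka H -> pos_part B H -> neg_part B H -> False.
Proof.
  intros H B [H1 _] [p Hp] [q Hq]. apply H1. exists B, p, q. repeat split; auto.
  - intros [r Hr]; subst. apply part_pt in Hp, Hq. apply (pt_self true B r false); [eapply pt_sub; eauto|discriminate].
  - intros [r Hr]; subst. apply part_pt in Hp, Hq. apply (pt_self false B r true); [eapply pt_sub; eauto|discriminate].
Qed.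

Fixpoint latoms (s : bool) (F : form) (t : bool) : list (nat*nat) :=
  match F with
  | Eps a b => if Bool.eqb s t then [(a,b)] else []
  | Or B C => if s then latoms true B t ++ latoms true C t else []
  | Neg B => latoms (negb s) B t
  end.

Lemma latoms_spec : forall F s t a b, In (a,b) (latoms s F t) <-> exists p, pt s F p (Eps a b) t.
Proof.
  induction F; intros s t a b; simpl.
  - split.
    + destruct (Bool.eqb s t) eqn:E; simpl; [|tauto].
      intros [Heq|[]]. inversion Heq; subst. apply Bool.eqb_prop in E; subst.
      exists []; apply pt_root.
    + intros [p Hp]. inversion Hp; subst. rewrite Bool.eqb_reflx. left; auto.
  - destruct s.
    + rewrite in_app_iff, IHF1, IHF2. split.
      * intros [[p Hp]|[p Hp]]; eexists; [apply pt_L|apply pt_R]; eauto.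
      * intros [p Hp]. inversion Hp; subst; eauto.
    + split; [simpl; tauto|]. intros [p Hp]; inversion Hp.
  - rewrite IHF. split.
    + intros [p Hp]; exists (dN::p); apply pt_N; auto.
    + intros [p Hp]; inversion Hp; subst; eauto.
Qed.

Lemma eval_claim : forall H v, hintikka H ->
  (forall a b p, pt true H p (Eps a b) false -> v a b = true) ->
  (forall a b p, pt true H p (Eps a b) true -> v a b = false) ->
  forall n B p s, fsize B < n -> pt true H p B s -> eval v B = negb s.
Proof.
  intros H v Hh Hn Hp n. induction n; intros B p s Hs HB; [lia|].
  destruct B as [a b|X Y|X]; simpl in *.
  - destruct s; eauto.
  - destruct s.
    + rewrite (IHn X (p++[dL]) true), (IHn Y (p++[dR]) true); try lia; auto.
      all: try (eapply pt_app_R; eauto; fail); try (eapply pt_app_L; eauto; fail).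
    + destruct Hh as [_ [H2 _]].
      destruct (H2 X Y) as [[q Hq]|[q Hq]]; [exists p; apply pt_part; auto| |];
        apply part_pt in Hq.
      * rewrite (IHn X q false); auto; lia.
      * rewrite (IHn Y q false); simpl; [apply orb_true_r|lia|auto].
  - rewrite (IHn X (p++[dN]) (negb s)); [destruct s; auto|lia|].
    eapply pt_app_N; eauto.
Qed.

Definition disj (x : form) (l : list form) : form := fold_left Or l x.

Lemma eval_disj : forall v l x, eval v (disj x l) = eval v x || existsb (eval v) l.
Proof.
  induction l; intros; simpl; [rewrite orb_false_r; auto|].
  unfold disj in *; simpl. rewrite IHl. simpl. rewrite orb_assoc; auto.
Qed.

Lemma subst_disj : forall s l x, subst s (disj x l) = disj (subst s x) (map (subst s) l).
Proof. induction l; intros; [reflexivity|]. unfold disj in *; simpl. rewrite IHl; auto. Qed.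

Lemma lit_disj_disj : forall l x, lit_disj x -> (forall y, In y l -> lit_disj y) -> lit_disj (disj x l).
Proof.
  induction l; intros; simpl; auto. unfold disj in *; simpl. apply IHl; [constructor|]; auto with datatypes.
Qed.

Lemma pt_or_eps : forall X Y a b s p, pt true (Or X Y) p (Eps a b) s ->
  (exists q, pt true X q (Eps a b) s) \/ (exists q, pt true Y q (Eps a b) s).
Proof. intros. inversion H; subst; eauto. Qed.

Lemma pt_or_eps_l : forall X Y a b s q, pt true X q (Eps a b) s -> pt true (Or X Y) (dL::q) (Eps a b) s.
Proof. intros; apply pt_L; auto. Qed.

Lemma pt_disj : forall l x a b s, (exists p, pt true (disj x l) p (Eps a b) s) <->
  (exists p, pt true x p (Eps a b) s) \/ exists y, In y l /\ exists p, pt true y p (Eps a b) s.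
Proof.
  induction l; intros; simpl.
  - split; [tauto|]. intros [H|[y [[] _]]]; auto.
  - unfold disj in *; simpl. rewrite IHl. split.
    + intros [[p Hp]|[y [Hy Hp]]].
      * apply pt_or_eps in Hp. destruct Hp as [H|H]; [left|right; exists a]; auto.
      * right; eauto.
    + intros [[p Hp]|[y [[Hy|Hy] [p Hp]]]]; subst.
      * left; exists (dL::p); apply pt_L; auto.
      * left; exists (dR::p); apply pt_R; auto.
      * right; eauto.
Qed.

Lemma ld_neg : forall Y, lit_disj Y -> forall p B, pt true Y p B false -> exists a b, B = Eps a b.
Proof.
  induction 1; intros p Z Hp; inversion Hp; subst; eauto.
  match goal with H : pt (negb true) _ _ _ _ |- _ => inversion H; subst; eauto end.
Qed.

Definition good (H Y : form) : Prop :=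
  lit_disj Y /\
  (forall a b, (exists p, pt true Y p (Eps a b) false) <-> (exists p, pt true H p (Eps a b) false)) /\
  (forall a b, (exists p, pt true Y p (Eps a b) true) -> exists p, pt true H p (Eps a b) true).

Lemma good_hint : forall H Y, hintikka H -> good H Y -> hintikka Y.
Proof.
  intros H Y Hh [Hl [Hn Hp]].
  assert (NE : forall a b, neg_part (Eps a b) Y <-> neg_part (Eps a b) H).
  { intros; rewrite !neg_part_pt; auto. }
  pose proof Hh as [_ [_ [H3 [H4 H5]]]].
  split; [|split; [|split; [|split]]].
  - intros [B [p [q [Hpp [Hqq _]]]]].
    apply part_pt in Hqq. destruct (ld_neg Y Hl q B Hqq) as [a [b ->]].
    apply part_pt in Hpp.
    apply (H_noconf H (Eps a b) Hh).
    + apply pos_part_pt. apply Hp. eauto.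
    + apply neg_part_pt. apply Hn. eauto.
  - intros B C Hbc. apply neg_part_pt in Hbc. destruct Hbc as [p Hbc].
    destruct (ld_neg Y Hl p _ Hbc) as [? [? E]]; discriminate.
  - intros a b. rewrite !NE. apply H3.
  - intros a b c. rewrite !NE. apply H4.
  - intros a b. rewrite !NE. apply H5.
Qed.

Lemma good_ext : forall H Y a b, good H Y -> (exists p, pt true H p (Eps a b) true) ->
  good H (Or Y (Eps a b)).
Proof.
  intros H Y a b [Hl [Hn Hp]] Hab. split; [constructor; auto; constructor|split].
  - intros c d. rewrite <- Hn. split.
    + intros [p Hq]. apply pt_or_eps in Hq. destruct Hq as [Hq|[q Hq]]; auto.
      inversion Hq.
    + intros [p Hq]. exists (dL::p). apply pt_L; auto.
  - intros c d [p Hq]. apply pt_or_eps in Hq. destruct Hq as [Hq|[q Hq]]; auto.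
    inversion Hq; subst; auto.
Qed.

Lemma ext_refut : forall a0 H, hintikka H -> forall l Y, refutH a0 Y -> good H Y ->
  (forall a b, In (a,b) l -> exists p, pt true H p (Eps a b) true) ->
  refutH a0 (disj Y (map (fun x => Eps (fst x) (snd x)) l)).
Proof.
  intros a0 H Hh. induction l as [|[a b] l IH]; intros Y HY Hg Hl; simpl; auto.
  unfold disj in *; simpl. apply IH.
  - apply rH_ext; auto.
    + eapply good_hint; eauto.
    + apply Hg.
    + intros Hneg. apply (H_noconf H (Eps a b) Hh).
      * apply pos_part_pt. apply (Hl a b). left; auto.
      * apply neg_part_pt. apply Hg. apply neg_part_pt; auto.
  - apply good_ext; auto. apply Hl; left; auto.
  - intros; apply Hl; right; auto.
Qed.

Definition negl (x : nat*nat) := Neg (Eps (fst x) (snd x)).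
Definition posl (x : nat*nat) := Eps (fst x) (snd x).

Lemma finish : forall a0 H D, hintikka H -> refutH a0 D ->
  (forall v, eval v D = false ->
     (forall a b, In (a,b) (latoms true H false) -> v a b = true) /\
     (forall a b, In (a,b) (latoms true H true) -> v a b = false)) ->
  refutH a0 H.
Proof.
  intros a0 H D Hh HD Hv. apply rH_mp with D; auto. apply pH_taut. intro v.
  simpl. destruct (eval v D) eqn:E; [apply orb_true_r|].
  destruct (Hv v E) as [Hn Hp].
  rewrite (eval_claim H v Hh) with (n := S (fsize H)) (p := []) (s := true); auto.
  - intros a b p Hq. apply Hn, latoms_spec; eauto.
  - intros a b p Hq. apply Hp, latoms_spec; eauto.
  - apply pt_root.
Qed.

Lemma existsb_false : forall (f : form -> bool) l y, existsb f l = false -> In y l -> f y = false.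
Proof.
  intros. destruct (f y) eqn:E; auto. assert (existsb f l = true) by (apply existsb_exists; eauto).
  congruence.
Qed.

Lemma pt_negl : forall c a b s p, pt true (negl c) p (Eps a b) s -> s = false /\ c = (a,b).
Proof.
  intros [c d] a b s p Hp. unfold negl in Hp; simpl in Hp. inversion Hp; subst.
  match goal with Hq : pt (negb true) _ _ _ _ |- _ => inversion Hq; subst end. auto.
Qed.

Lemma pt_negl' : forall a b, pt true (negl (a,b)) [dN] (Eps a b) false.
Proof. intros; apply pt_N, pt_root. Qed.

Lemma hint_refut : forall a0 H, hintikka H -> refutH a0 H.
Proof.
  intros a0 H Hh.
  destruct (latoms true H false) as [|n1 ns] eqn:En.
  - destruct (latoms true H true) as [|p1 ps] eqn:Ep.
    + apply (finish a0 H (Eps a0 a0)); [auto|constructor|].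
      intros; rewrite En, Ep; simpl; split; tauto.
    + apply (finish a0 H (disj (posl p1) (map posl ps))); auto.
      * apply (ext_refut a0 H Hh).
        -- apply rH_subst with (Eps a0 a0) (fun _ => a0); [constructor|reflexivity].
        -- split; [constructor|split].
           ++ intros a b. split; intros [p Hq]; [inversion Hq|].
              assert (In (a,b) (latoms true H false)) by (apply latoms_spec; eauto).
              rewrite En in H0; destruct H0.
           ++ intros a b [p Hq]. inversion Hq; subst. apply latoms_spec. rewrite Ep.
              left; destruct p1; auto.
        -- intros a b Hin. apply latoms_spec. rewrite Ep; right; auto.
      * intros v E. rewrite eval_disj in E. apply orb_false_elim in E as [E1 E2].
        rewrite En, Ep. split; [simpl; tauto|].
        intros a b [Hin|Hin].
        -- subst; exact E1.
        -- apply (existsb_false _ _ (posl (a,b))) in E2; auto. apply in_map_iff; eauto.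
  - set (X0 := disj (negl n1) (map negl ns)).
    apply (finish a0 H (disj X0 (map posl (latoms true H true)))); auto.
    + apply (ext_refut a0 H Hh).
      * apply rH_subst with (subst (fun _ => a0) X0) (fun _ => a0); [|reflexivity].
        apply rH_mp with (Neg (Eps a0 a0)); [|constructor].
        apply pH_taut; intro v. unfold X0. rewrite subst_disj. simpl.
        rewrite eval_disj. simpl.
        destruct (v a0 a0) eqn:V; simpl; auto.
        destruct (existsb (eval v) (map (subst (fun _ => a0)) (map negl ns))) eqn:Ex; auto.
        apply existsb_exists in Ex. destruct Ex as [y [Hy Hy']].
        rewrite map_map in Hy. apply in_map_iff in Hy. destruct Hy as [[c d] [<- _]].
        simpl in Hy'. rewrite V in Hy'. discriminate.
      * split; [|split].
        -- apply lit_disj_disj; [constructor|]. intros y Hy. apply in_map_iff in Hy.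
           destruct Hy as [? [<- _]]; constructor.
        -- intros a b. split.
           ++ intros Hq. apply pt_disj in Hq. apply latoms_spec. rewrite En.
              destruct Hq as [[p Hq]|[y [Hy [p Hq]]]].
              ** apply pt_negl in Hq as [_ ->]; left; auto.
              ** apply in_map_iff in Hy. destruct Hy as [c [<- Hc]].
                 apply pt_negl in Hq as [_ ->]; right; auto.
           ++ intros Hq. apply latoms_spec in Hq. rewrite En in Hq. apply pt_disj.
              destruct Hq as [->|Hq].
              ** left; eexists; apply pt_negl'.
              ** right. exists (negl (a,b)). split; [apply in_map; auto|].
                 eexists; apply pt_negl'.
        -- intros a b Hq. apply pt_disj in Hq.
           destruct Hq as [[p Hq]|[y [Hy [p Hq]]]].
           ++ apply pt_negl in Hq as [E _]; discriminate.
           ++ apply in_map_iff in Hy. destruct Hy as [c [<- Hc]].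
              apply pt_negl in Hq as [E _]; discriminate.
      * intros a b Hin. apply latoms_spec; auto.
    + intros v E. rewrite eval_disj in E. apply orb_false_elim in E as [E1 E2].
      unfold X0 in E1. rewrite eval_disj in E1. apply orb_false_elim in E1 as [E1 E3].
      split.
      * intros a b Hin. rewrite En in Hin. destruct Hin as [->|Hin].
        -- simpl in E1. destruct (v a b); auto.
        -- apply (existsb_false _ _ (negl (a,b))) in E3; [|apply in_map; auto].
           simpl in E3. destruct (v a b); auto.
      * intros a b Hin. apply (existsb_false _ _ (posl (a,b))) in E2; auto.
        apply in_map_iff; eauto.
Qed.

Lemma branch_head : forall t cs, branch t cs -> exists r, cs = label t :: r.
Proof. induction 1; simpl; eauto. Qed.

Lemma branch_step : forall t cs, branch t cs -> tableau_ok t ->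
  forall i d, S i < length cs -> exists X, nth (S i) cs d = Or (nth i cs d) (Neg X).
Proof.
  induction 1; simpl; intros Hok i d Hi.
  - lia.
  - destruct Hok as [Hr Hok]. destruct i.
    + destruct (branch_head _ _ H) as [r ->]. simpl.
      destruct Hr as [[p [a [b [_ E]]]]|[[p [q [a [b [c [_ [_ [_ E]]]]]]]]|[p [q [a [b [_ [_ [_ E]]]]]]]]]; eauto.
    + apply IHbranch; auto; lia.
  - destruct Hok as [Hr [Hok1 Hok2]]. destruct i.
    + destruct (branch_head _ _ H) as [r ->]. simpl.
      destruct Hr as [p [B0 [C0 [_ [E1 E2]]]]]; eauto.
    + apply IHbranch; auto; lia.
  - destruct Hok as [Hr [Hok1 Hok2]]. destruct i.
    + destruct (branch_head _ _ H) as [r ->]. simpl.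
      destruct Hr as [p [B0 [C0 [_ [E1 E2]]]]]; eauto.
    + apply IHbranch; auto; lia.
Qed.

Lemma last_nth' : forall (l : list form) d, l <> [] -> last l d = nth (length l - 1) l d.
Proof.
  induction l; intros d Hl; [congruence|]. destruct l; [reflexivity|].
  change (last (a :: f :: l) d) with (last (f :: l) d).
  rewrite IHl by discriminate. simpl. destruct (length l); reflexivity.
Qed.

Lemma pos_trans : forall X Y Z, pos_part X Y -> pos_part Y Z -> pos_part X Z.
Proof.
  intros X Y Z [p Hp] [q Hq]. exists (q ++ p). apply part_pt in Hp. eapply pt_part_gen; eauto.
Qed.

Lemma pos_step : forall C X, pos_part C (Or C (Neg X)).
Proof. intros. exists [dL]. apply pt_part, pt_L, pt_root. Qed.

Theorem lemma3p5 (a0 : nat) (A : form) (t : tree) (cs : list form) :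
  tableau_for A t ->
  branch t cs ->
  hintikka (last cs A) ->
  (forall i, i < length cs -> pos_part (nth i cs A) (last cs A)) /\
  (forall i, S i < length cs -> provH (Imp (nth i cs A) (nth (S i) cs A))) /\
  (forall i, i < length cs -> refutH a0 (nth i cs A)).
Proof.
  intros [_ Hok] Hb Hh.
  pose proof (branch_step _ _ Hb Hok) as Hs.
  assert (Hne : cs <> []) by (destruct (branch_head _ _ Hb) as [r ->]; discriminate).
  rewrite last_nth' in * by auto.
  set (m := length cs - 1) in *.
  assert (Hm : length cs = S m) by (destruct cs; [congruence|simpl in *; unfold m; lia]).
  split; [|split].
  - assert (G : forall k i, i + k = m -> pos_part (nth i cs A) (nth m cs A)).
    { induction k; intros i Hik.
      - replace i with m by lia. exists []. apply part_root.
      - apply pos_trans with (nth (S i) cs A).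
        + destruct (Hs i A) as [X ->]; [lia|]. apply pos_step.
        + apply IHk; lia. }
    intros i Hi. apply (G (m - i)); lia.
  - intros i Hi. destruct (Hs i A Hi) as [X ->]. apply pH_taut. intro v. simpl.
    destruct (eval v (nth i cs A)); auto.
  - pose proof (hint_refut a0 _ Hh) as Hr.
    assert (G : forall k i, i + k = m -> refutH a0 (nth i cs A)).
    { induction k; intros i Hik.
      - replace i with m by lia. auto.
      - apply rH_mp with (nth (S i) cs A); [|apply IHk; lia].
        destruct (Hs i A) as [X ->]; [lia|]. apply pH_taut. intro v. simpl.
        destruct (eval v (nth i cs A)); auto. }
    intros i Hi. apply (G (m - i)); lia.
Qed.
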